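(* Let $B\subseteq\mathbb{Z}_q^n$ satisfy $|B|\ge q^{n-b}$ for some $b\in\mathbb{N}$. Then for every $\mathbf{v}\in\mathbb{Z}_q^n$ and every integer $h$ with $b<h\le n$, $$\sum_{\mathbf{u}\in\mathbb{Z}_q^n:\ \|\mathbf{u}+\mathbf{v}\|_0=h}\frac{q^n}{|B|}\left|\widehat{\mathbf{1}_B}(\mathbf{u})\right|\le\left(\frac{2q^2e^2n}{h}\right)^{h/2}.$$
   Context: For $f:\mathbb{Z}_q^n\to\mathbb{C}$, $\widehat f(\mathbf{u})=q^{-n}\sum_{\mathbf{a}\in\mathbb{Z}_q^n}f(\mathbf{a})\omega^{-\mathbf{u}^\top\mathbf{a}}$ with $\omega=e^{2\pi i/q}$. $\mathbf{1}_B$ is the indicator function of $B$, and $\|\mathbf{u}\|_0$ is the number of nonzero coordinates of $\mathbf{u}$. *)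

(* Defs.v *)
From HB Require Import structures.
From mathcomp Require Import all_boot all_order all_algebra.
From mathcomp Require Import complex.
From mathcomp Require Import all_classical all_reals all_analysis.
Set Implicit Arguments. Unset Strict Implicit. Unset Printing Implicit Defensive.
Import Order.TTheory GRing.Theory Num.Theory.
Local Open Scope ring_scope.

(* Vectors of Z_q^n (q >= 2 is assumed in the theorem, so 'Z_q = Z/qZ). *)
Definition zvec (q n : nat) := 'rV['Z_q]_n.

Definition zdot (q n : nat) (u a : zvec q n) : 'Z_q := \sum_(i < n) u 0 i * a 0 i.

Definition hwt (q n : nat) (u : zvec q n) : nat := #|[set i : 'I_n | u 0 i != 0]|.

Definition omega (R : realType) (q : nat) : R[i] :=
  (cos (2 * pi / q%:R) +i* sin (2 * pi / q%:R))%C.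

Definition fourier (R : realType) (q n : nat) (f : zvec q n -> R[i]) (u : zvec q n)
  : R[i] :=
  ((q ^ n)%:R)^-1 * \sum_(a : zvec q n) f a * (omega R q) ^- (nat_of_ord (zdot u a)).

Definition indicZ (R : realType) (q n : nat) (B : {set zvec q n}) : zvec q n -> R[i] :=
  fun a => (a \in B)%:R.

Definition cabs (R : realType) (z : R[i]) : R :=
  Num.sqrt (complex.Re z ^+ 2 + complex.Im z ^+ 2).

(* Main.v *)
Require Import Defs.
From HB Require Import structures.
From mathcomp Require Import all_boot all_order all_algebra.
From mathcomp Require Import complex.
From mathcomp Require Import all_classical all_reals all_analysis.
From mathcomp Require Import ring lra.
Import Order.TTheory GRing.Theory Num.Theory.
Local Open Scope ring_scope.
Local Open Scope complex_scope.
Set Implicit Arguments. Unset Strict Implicit.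

Section Om.
Variable R : realType.

Lemma cis_mul (x y : R) :
  ((cos x +i* sin x) * (cos y +i* sin y) = cos (x+y) +i* sin (x+y))%C.
Proof. rewrite cosD sinD /=; congr (_ +i* _); ring. Qed.

Lemma omegaX (q k : nat) : omega R q ^+ k =
  (cos (k%:R * (2 * pi / q%:R)) +i* sin (k%:R * (2 * pi / q%:R)))%C.
Proof.
elim: k => [|k IH]; first by rewrite expr0 mul0r cos0 sin0.
rewrite exprS IH /omega cis_mul; congr (cos _ +i* sin _); rewrite -natr1; ring.
Qed.

Lemma omega_q (q : nat) : (0 < q)%N -> omega R q ^+ q = 1.
Proof.
move=> hq; rewrite omegaX.
have -> : q%:R * (2 * pi / q%:R) = pi *+ 2 :> R.
  have hq' : q%:R != 0 :> R by rewrite pnatr_eq0 -lt0n.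
  by rewrite mulr2n; field.
by rewrite cos2pi sin2pi.
Qed.

Lemma omega_neq1 (q k : nat) : (0 < k)%N -> (k < q)%N -> omega R q ^+ k != 1.
Proof.
move=> k0 kq; rewrite omegaX; apply/negP => /eqP [hc hs].
set x := _ * _ in hc hs.
have hq : (0 < q%:R :> R) by rewrite ltr0n; apply: leq_ltn_trans kq.
have hy : 0 < x / 2 < pi.
  rewrite /x; apply/andP; split.
    by rewrite divr_gt0 // mulr_gt0 ?ltr0n // divr_gt0 // mulr_gt0 ?pi_gt0.
  have -> : k%:R * (2 * pi / q%:R) / 2 = pi * (k%:R / q%:R) :> R.
    by field; rewrite gt_eqF.
  rewrite -[ltRHS]mulr1 ltr_pM2l ?pi_gt0 // ltr_pdivrMr // mul1r ltr_nat //.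
have := sin_gt0_pi hy.
have : cos x = cos (x/2 + x/2) by congr cos; field.
rewrite cosD hc -!expr2 cos2sin2 => /eqP.
rewrite -subr_eq0 => /eqP e.
have : sin (x / 2) ^+ 2 = 0 by lra.
by move/eqP; rewrite sqrf_eq0 => /eqP ->; rewrite ltxx.
Qed.

Lemma omega_conj (q : nat) : omega R q * (omega R q)^*%C = 1.
Proof.
rewrite /omega /=; congr (_ +i* _).
  by rewrite mulrN opprK -!expr2 cos2Dsin2.
ring.
Qed.

Definition chi (q : nat) (x : 'Z_q) : R[i] := omega R q ^+ (nat_of_ord x).
Arguments chi {q}.

Lemma omega_qZ (q : nat) : (1 < q)%N -> omega R q ^+ (Zp_trunc q).+2 = 1.
Proof. by move=> hq; rewrite Zp_cast // omega_q // ltnW. Qed.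

Lemma chiD q (hq : (1 < q)%N) (x y : 'Z_q) : chi (x + y) = chi x * chi y.
Proof.
rewrite /chi.
have -> : nat_of_ord (x + y) = ((x + y) %% (Zp_trunc q).+2)%N by [].
by rewrite (expr_mod _ (omega_qZ hq)) exprD.
Qed.

Lemma chi0 q : chi (0 : 'Z_q) = 1.
Proof. by rewrite /chi expr0. Qed.

Lemma chiN q (hq : (1 < q)%N) (x : 'Z_q) : chi x * chi (- x) = 1.
Proof. by rewrite -chiD // subrr chi0. Qed.

Lemma chi_neq0 q (hq : (1 < q)%N) (x : 'Z_q) : chi x != 0.
Proof. by apply/negP => /eqP e; have := chiN hq x; rewrite e mul0r => /eqP; rewrite eq_sym oner_eq0. Qed.

Lemma chiNV q (hq : (1 < q)%N) (x : 'Z_q) : chi (- x) = (chi x)^-1.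
Proof. by apply: (mulfI (chi_neq0 hq x)); rewrite chiN // mulfV // chi_neq0. Qed.

Lemma chi_eq1 q (hq : (1 < q)%N) (x : 'Z_q) : chi x = 1 -> x = 0.
Proof.
move=> h; case: (eqVneq x 0) => // nx; exfalso; move: h; apply/eqP.
have x0 : (0 < nat_of_ord x)%N.
  rewrite lt0n; apply: contra nx => /eqP e; apply/eqP/val_inj => //=.
have xq : (nat_of_ord x < q)%N by rewrite -[q in (_ < q)%N]Zp_cast // ltn_ord.
exact: omega_neq1.
Qed.

Lemma chi_conj q (hq : (1 < q)%N) (x : 'Z_q) : (chi x)^* = (chi x)^-1.
Proof.
have om0 : omega R q != 0.
  apply/negP => /eqP e; have := omega_q (ltnW hq); rewrite e expr0n.
  have -> : (q == 0%N) = false by rewrite eqn0Ngt ltnW.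
  by move/eqP; rewrite eq_sym oner_eq0.
have oc : (omega R q)^* = (omega R q)^-1.
  by apply: (mulfI om0); rewrite omega_conj mulfV.
rewrite /chi -exprVn -oc rmorphXn; congr (_ ^+ _).
Qed.
End Om.

Section Zd.
Variables (q n : nat).
Implicit Types (u a c : zvec q n).

Lemma zdotDl u u' a : zdot (u + u') a = zdot u a + zdot u' a.
Proof. by rewrite /zdot -big_split; apply: eq_bigr => i _; rewrite mxE mulrDl. Qed.

Lemma zdotBr u a a' : zdot u (a - a') = zdot u a - zdot u a'.
Proof. by rewrite /zdot -sumrB; apply: eq_bigr => i _; rewrite !mxE mulrBr. Qed.

Lemma zdot0r u : zdot u 0 = 0.
Proof. by rewrite /zdot big1 // => i _; rewrite mxE mulr0. Qed.

Lemma zdot_delta j a : zdot (delta_mx 0 j) a = a 0 j.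
Proof.
rewrite /zdot (bigD1 j) //= big1 ?addr0; first by rewrite mxE !eqxx mul1r.
by move=> i /negPf ij; rewrite mxE ij andbF mul0r.
Qed.

Lemma charsum (R : realType) (hq : (1 < q)%N) c :
  \sum_(u : zvec q n) chi R (zdot u c) = (q ^ n)%:R * (c == 0)%:R.
Proof.
case: (eqVneq c 0) => [->|nc].
  rewrite mulr1 (eq_bigr (fun _ => 1)); last by move=> u _; rewrite zdot0r chi0.
  by rewrite sumr_const card_mx card_ord Zp_cast // mul1n.
rewrite mulr0.
have [j cj] : exists j, c 0 j != 0.
  case: (pickP (fun j => c 0 j != 0)) => [j cj|hn]; first by exists j.
  exfalso; move/negP: nc; apply; apply/eqP/matrixP => i k.
  by rewrite (ord1 i) mxE; have := hn k => /negbFE/eqP.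
pose S := \sum_(u : zvec q n) chi R (zdot u c).
have eS : S = S * chi R (c 0 j).
  rewrite /S mulr_suml [LHS](reindex_inj (addIr (delta_mx 0 j))) /=.
  by apply: eq_bigr => u _; rewrite zdotDl zdot_delta chiD.
have : S * (1 - chi R (c 0 j)) = 0 by rewrite mulrBr mulr1 -eS subrr.
move/eqP; rewrite mulf_eq0 subr_eq0 => /orP [/eqP //|/eqP e].
by exfalso; move/negP: cj; apply; apply/eqP; apply: (chi_eq1 hq); exact: (esym e).
Qed.
End Zd.

Section Pars.
Variables (R : realType) (q n : nat) (hq : (1 < q)%N) (B : {set zvec q n}).
Let f := indicZ R B.
Let Q : R[i] := (q ^ n)%:R.
Let F := fourier f.

Lemma chiV_eq (u a : zvec q n) : omega R q ^- (nat_of_ord (zdot u a)) = (chi R (zdot u a))^-1.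
Proof. by []. Qed.

Lemma F_conj u : (F u)^* = Q^-1 * \sum_a f a * chi R (zdot u a).
Proof.
rewrite /F /fourier rmorphM rmorph_sum /= conjc_inv conjc_nat; congr (_ * _).
apply: eq_bigr => a _; rewrite rmorphM /= /f /indicZ conjc_nat; congr (_ * _).
by rewrite chiV_eq conjc_inv chi_conj // invrK.
Qed.

Lemma F_sq u : F u * (F u)^*%C =
  Q^-1 * Q^-1 * \sum_a \sum_a' (f a * f a') * chi R (zdot u (a' - a)).
Proof.
rewrite F_conj /F /fourier mulrACA; congr (_ * _).
rewrite mulr_suml; apply: eq_bigr => a _; rewrite mulr_sumr; apply: eq_bigr => a' _.
rewrite chiV_eq mulrACA; congr (_ * _).
by rewrite zdotBr chiD // chiNV // mulrC.
Qed.

Lemma fsq_sum : \sum_a f a * f a = (#|B|)%:R.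
Proof.
rewrite (bigID (mem B)) /= [X in _ + X]big1 ?addr0; last first.
  by move=> a /negPf; rewrite /f /indicZ => ->; rewrite mul0r.
rewrite (eq_bigr (fun _ => 1)); last by move=> a aB; rewrite /f /indicZ aB mulr1.
by rewrite sumr_const.
Qed.

Lemma pars_c : \sum_u F u * (F u)^*%C = (#|B|)%:R / Q.
Proof.
under eq_bigr do rewrite F_sq.
rewrite -mulr_sumr exchange_big /=.
have inner a : \sum_u \sum_a' f a * f a' * chi R (zdot u (a' - a)) = f a * f a * Q.
  rewrite exchange_big /= (bigD1 a) //= [X in _ + X]big1 ?addr0.
    by rewrite -mulr_sumr charsum // subrr eqxx mulr1.
  move=> a' na'; rewrite -mulr_sumr charsum //.
  have -> : (a' - a == 0) = false by rewrite subr_eq0 (negPf na').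
  by rewrite mulr0 mulr0.
under eq_bigr do rewrite inner.
rewrite -mulr_suml fsq_sum.
have Q0 : Q != 0 by rewrite /Q pnatr_eq0 expn_eq0 negb_and; apply/orP; left; rewrite -lt0n ltnW.
by field.
Qed.
End Pars.

Lemma cabs_sq (R : realType) (z : R[i]) : ((cabs z) ^+ 2)%:C = z * z^*%C.
Proof.
case: z => a b; rewrite /cabs /= sqr_sqrtr ?addr_ge0 ?sqr_ge0 //.
congr (_ +i* _); ring.
Qed.

Lemma cabs_ge0 (R : realType) (z : R[i]) : 0 <= cabs z.
Proof. exact: sqrtr_ge0. Qed.

Lemma pars_r (R : realType) (q n : nat) (hq : (1 < q)%N) (B : {set zvec q n}) :
  \sum_u cabs (fourier (indicZ R B) u) ^+ 2 = (#|B|)%:R / (q ^ n)%:R.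
Proof.
apply: (@complexI R); rewrite rmorph_sum /=.
under eq_bigr do rewrite cabs_sq.
by rewrite pars_c // rmorphM /= fmorphV /= !rmorph_nat.
Qed.


Lemma cs_sum (R : realFieldType) (I : finType) (P : pred I) (x : I -> R) :
  (\sum_(i | P i) x i) ^+ 2 <= #|P|%:R * \sum_(i | P i) x i ^+ 2.
Proof.
case: (posnP #|P|) => [N0|Npos].
  have h : forall i, P i = false by move=> i; have := card0_eq N0 i.
  by rewrite !big_pred0 // expr0n /= N0 mul0r.
set s := \sum_(i | P i) x i; set A := \sum_(i | P i) x i ^+ 2.
set Nr : R := #|P|%:R.
have Nr0 : 0 < Nr by rewrite ltr0n.
set t := s / Nr.
have h0 : 0 <= \sum_(i | P i) (x i - t) ^+ 2 by apply: sumr_ge0 => i _; apply: sqr_ge0.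
have e1 : \sum_(i | P i) (x i - t) ^+ 2 = A - s * (2 * t) + t ^+ 2 * Nr.
  rewrite (eq_bigr (fun i => x i ^+ 2 - x i * (2 * t) + t ^+ 2)); last by move=> i _; ring.
  by rewrite big_split sumrB /= -mulr_suml sumr_const mulr_natr.
have e2 : Nr * (A - s * (2 * t) + t ^+ 2 * Nr) = Nr * A - s ^+ 2.
  by rewrite /t; field; rewrite gt_eqF.
have h1 : 0 <= Nr * (A - s * (2 * t) + t ^+ 2 * Nr) by rewrite -e1 mulr_ge0 // ltW.
move: h1; rewrite e2; lra.
Qed.


Lemma count_S (q n h : nat) (v : zvec q n) :
  (#|[pred u : zvec q n | hwt (u + v)%R == h]| <= 'C(n, h) * (Zp_trunc q).+2 ^ h)%N.
Proof.
pose supp (w : zvec q n) := [set i : 'I_n | w 0 i != 0].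
pose sq (w : zvec q n) := [seq w 0 j | j <- enum (supp w)].
pose phi (u : zvec q n) : {set 'I_n} * {ffun 'I_h -> 'Z_q} :=
  (supp (u + v), [ffun i : 'I_h => nth 0 (sq (u + v)) i]).
set D := [pred u : zvec q n | hwt (u + v) == h].
have inj : {in D &, injective phi}.
  move=> u1 u2; rewrite !inE => /eqP h1 /eqP h2 [eT ef].
  apply: (addIr v).
  have sz1 : size (sq (u1 + v)) = h by rewrite size_map -cardE.
  have sz2 : size (sq (u2 + v)) = h by rewrite size_map -cardE.
  have es : sq (u1 + v) = sq (u2 + v).
    apply: (@eq_from_nth _ 0); first by rewrite sz1 sz2.
    move=> i; rewrite sz1 => hi.
    by have := congr1 (fun g : {ffun 'I_h -> 'Z_q} => g (Ordinal hi)) ef; rewrite !ffunE.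
  move: es; rewrite /sq -eT => /eq_in_map es.
  apply/matrixP => i j; rewrite (ord1 i).
  case: (boolP (j \in supp (u1 + v))) => hj.
    by apply: es; rewrite mem_enum.
  move: (hj); rewrite eT !inE => /negbNE/eqP -> ; move: hj; rewrite inE.
  by move/negbNE/eqP.
rewrite -(card_in_imset inj).
have sub : [set phi x | x in D] \subset
    finset.setX [set A : {set 'I_n} | #|A| == h] [set: {ffun 'I_h -> 'Z_q}].
  apply/fintype.subsetP => y /imsetP [u]; rewrite inE => hu ->.
  by rewrite !inE andbT.
apply: leq_trans (subset_leq_card sub) _.
by rewrite cardsX card_draws cardsT card_ffun !card_ord.
Qed.


Lemma ffact_le_exp (n m : nat) : (n ^_ m <= n ^ m)%N.
Proof.
elim: m n => [|m IH] [|n] //=.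
rewrite ffactSS expnS leq_mul2l /=; apply: leq_trans (IH n) _.
by case: m IH => [|m'] IH; [rewrite !expn0 | rewrite leq_exp2r].
Qed.

Lemma hh_le (R : realType) (h : nat) : (h%:R : R) ^+ h <= expR 1 ^+ h * h`!%:R.
Proof.
case: h => [|m]; first by rewrite !expr0 mul1r fact0.
have := expR_ge1Dxn (x := (m.+1)%:R : R) m (ler0n _ _).
rewrite -[X in expR X]mulr1 expRM_natl => hle.
have hf : 0 < (m.+1)`!%:R :> R by rewrite ltr0n fact_gt0.
have : (m.+1)%:R ^+ m.+1 / (m.+1)`!%:R <= expR 1 ^+ m.+1 :> R by lra.
by rewrite ler_pdivrMr.
Qed.

Lemma binom_bound (R : realType) (n h : nat) :
  ('C(n, h)%:R * (h%:R) ^+ h : R) <= (n%:R) ^+ h * (expR 1) ^+ h.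
Proof.
have h1 : ('C(n, h) * h`! <= n ^ h)%N by rewrite bin_ffact ffact_le_exp.
have h1' : ('C(n, h)%:R * h`!%:R : R) <= (n%:R) ^+ h by rewrite -natrM -natrX ler_nat.
apply: le_trans (_ : 'C(n, h)%:R * (expR 1 ^+ h * h`!%:R) <= _).
  by rewrite ler_wpM2l // hh_le.
rewrite mulrCA mulrC ler_wpM2r // exprn_ge0 // expR_ge0.
Qed.


Theorem lemma6p6 (R : realType) (q n : nat) (hq : (1 < q)%N)
  (B : {set zvec q n}) (b : nat) (hB : (q ^ (n - b) <= #|B|)%N)
  (v : zvec q n) (h : nat) (hbh : (b < h)%N) (hhn : (h <= n)%N) :
  \sum_(u : zvec q n | hwt (u + v) == h)
      ((q ^ n)%:R / (#|B|)%:R) * cabs (fourier (indicZ R B) u)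
  <= powR ((2 * (q%:R) ^+ 2 * (expR 1) ^+ 2 * n%:R) / h%:R) (h%:R / 2).
Proof.
have q0 : (0 < q)%N := ltnW hq.
have hbn : (b <= n)%N by apply: ltnW; apply: leq_trans hbh hhn.
have h0 : (0 < h)%N by apply: leq_ltn_trans hbh.
have Npos : (0 < #|B|)%N by apply: leq_trans hB; rewrite expn_gt0 q0.
set F := fourier (indicZ R B).
set Nr : R := (#|B|)%:R.
set Qr : R := (q ^ n)%:R.
have Nr0 : 0 < Nr by rewrite ltr0n.
have Qr0 : 0 < Qr by rewrite ltr0n expn_gt0 q0.
rewrite -mulr_sumr.
set P := fun u : zvec q n => hwt (u + v) == h.
set s := \sum_(u | P u) cabs (F u).
have s0 : 0 <= s by apply: sumr_ge0 => u _; apply: cabs_ge0.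
set Pr : R := (#|P|)%:R.
have hs2 : s ^+ 2 <= Pr * (Nr / Qr).
  apply: le_trans (cs_sum P (fun u => cabs (F u))) _.
  rewrite ler_wpM2l ?ler0n //.
  rewrite -(pars_r R hq B) -/F [X in _ <= X](bigID P) /= lerDl.
  by apply: sumr_ge0 => u _; apply: sqr_ge0.
have hP : (#|P| <= 'C(n, h) * q ^ h)%N.
  by apply: leq_trans (count_S h v) _; rewrite Zp_cast.
have hnat : (#|P| * q ^ b <= 'C(n, h) * (q ^ 2) ^ h)%N.
  apply: leq_trans (leq_mul hP (leq_pexp2l q0 (ltnW hbh))) _.
  by rewrite -mulnA -expnMn.
have hQ : Qr <= Nr * (q%:R) ^+ b.
  rewrite /Qr /Nr -natrX -natrM ler_nat.
  have -> : (q ^ n = q ^ (n - b) * q ^ b)%N by rewrite -expnD subnK.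
  by rewrite leq_mul2r hB orbT.
have main : (Qr / Nr * s) ^+ 2 <= ('C(n, h))%:R * ((q%:R) ^+ 2) ^+ h.
  apply: le_trans (_ : _ <= (Qr / Nr) ^+ 2 * (Pr * (Nr / Qr))) _.
    by rewrite exprMn ler_wpM2l // exprn_ge0 // divr_ge0 // ltW.
  have -> : (Qr / Nr) ^+ 2 * (Pr * (Nr / Qr)) = Pr * (Qr / Nr).
    by field; rewrite !gt_eqF.
  apply: le_trans (_ : _ <= Pr * (q%:R) ^+ b) _.
    by rewrite ler_wpM2l ?ler0n // ler_pdivrMr // mulrC.
  by rewrite /Pr -!natrX -!natrM ler_nat.
have hr0 : 0 < (h%:R : R) by rewrite ltr0n.
have e2 : 2 <= expR 1 :> R by have := expR_ge1Dx (1 : R); lra.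
set base := _ / h%:R.
set K : R := (q%:R) ^+ 2 * (n%:R * expR 1 / h%:R).
have ebase : base = K * (2 * expR 1) by rewrite /base /K; field; rewrite gt_eqF.
have K0 : 0 <= K by rewrite /K mulr_ge0 ?sqr_ge0 // divr_ge0 ?ler0n // mulr_ge0 ?ler0n ?expR_ge0.
have hK : ('C(n, h))%:R * ((q%:R) ^+ 2) ^+ h <= K ^+ h.
  rewrite mulrC /K [X in _ <= X]exprMn ler_wpM2l ?exprn_ge0 ?sqr_ge0 // expr_div_n.
  by rewrite ler_pdivlMr ?exprn_gt0 // exprMn binom_bound.
have hK2 : K ^+ h <= base ^+ h.
  rewrite ebase [X in _ <= X]exprMn ler_peMr ?exprn_ge0 // exprn_ege1 //; lra.
have base0 : 0 <= base by rewrite ebase mulr_ge0 //; lra.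
have pw : powR base (h%:R / 2) ^+ 2 = base ^+ h.
  rewrite -(powR_mulrn 2 (powR_ge0 _ _)) -powRrM.
  have -> : h%:R / 2 * 2%:R = h%:R :> R by field.
  by rewrite powR_mulrn.
have L0 : Qr / Nr * s \is Num.nneg by rewrite nnegrE mulr_ge0 // divr_ge0 // ltW.
have R0 : base `^ (h%:R / 2) \is Num.nneg by rewrite nnegrE powR_ge0.
rewrite -(ler_sqr L0 R0) pw.
by apply: le_trans main (le_trans hK hK2).
Qed.
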